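(* If $G$ is a maximal subgroup of a finite semigroup $S$, then $\mathrm{EQN\text{-}SAT}(G)\le_{\mathrm m}^{\mathsf{AC}^0}\mathrm{EQN\text{-}SAT}(S)$.
   Context: A maximal subgroup of a semigroup $S$ is a subsemigroup that is a group and is maximal under inclusion among such (equivalently, the $\mathcal{H}$-class of an idempotent). For a group $G$, $\mathrm{EQN\text{-}SAT}(G)$: given a word $\alpha$ over $G\cup\mathcal{X}\cup\mathcal{X}^{-1}$ (variables and formal inverses), decide whether there is $\sigma:\mathcal{X}\to G$ with $\sigma(\alpha)=1$. For a semigroup $S$, $\mathrm{EQN\text{-}SAT}(S)$: given two words over $S\cup\mathcal{X}$, decide whether some assignment $\sigma:\mathcal{X}\to S$ makes them evaluate to the same element. $\le_{\mathrm m}^{\mathsf{AC}^0}$ denotes many-one reducibility via functions computable by polynomial-size constant-depth Boolean circuits. *)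

(* Defs.v *)
From mathcomp Require Import all_boot.
Set Implicit Arguments. Unset Strict Implicit. Unset Printing Implicit Defensive.

Section Semigroup.
Variables (S : finType) (op : S -> S -> S).

Definition is_identity_of (G : {set S}) (e : S) : Prop :=
  e \in G /\ forall g, g \in G -> op e g = g /\ op g e = g.

Definition is_subgroup (G : {set S}) : Prop :=
  (forall g h, g \in G -> h \in G -> op g h \in G) /\
  exists e, is_identity_of G e /\
    forall g, g \in G -> exists2 h, h \in G & op g h = e /\ op h g = e.

Definition maximal_subgroup (G : {set S}) : Prop :=
  is_subgroup G /\ forall H : {set S}, is_subgroup H -> G \subset H -> H = G.

(* A letter over G u X u X^-1 : inl g (constant, required to lie in G),
   inr (x, true) = variable x, inr (x, false) = formal inverse x^-1;
   variables are indexed by nat. *)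
Definition gletter := (S + (nat * bool))%type.

Definition ginv (G : {set S}) (e g : S) : S :=
  odflt e [pick h in G | (op g h == e) && (op h g == e)].

Definition gval (G : {set S}) (e : S) (sigma : nat -> S) (a : gletter) : S :=
  match a with
  | inl g => g
  | inr (x, true) => sigma x
  | inr (x, false) => ginv G e (sigma x)
  end.

Definition geval (G : {set S}) (e : S) (sigma : nat -> S) (w : seq gletter) : S :=
  foldr (fun a acc => op (gval G e sigma a) acc) e w.

Definition gsat (G : {set S}) (w : seq gletter) : Prop :=
  exists e, is_identity_of G e /\
    exists sigma : nat -> S, (forall x, sigma x \in G) /\ geval G e sigma w = e.

Definition sletter := (S + nat)%type.

Definition sval (sigma : nat -> S) (a : sletter) : S :=
  match a with inl s => s | inr x => sigma x end.

(* words over a semigroup are non-empty; the empty word has no value *)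
Definition seval (sigma : nat -> S) (w : seq sletter) : option S :=
  match w with
  | [::] => None
  | a :: w' => Some (foldl (fun acc b => op acc (sval sigma b)) (sval sigma a) w')
  end.

Definition ssat (u v : seq sletter) : Prop :=
  exists (sigma : nat -> S) (s : S), seval sigma u = Some s /\ seval sigma v = Some s.

(* Letter codes (tag in the two low-order bits):
   group instance:     g |-> 4 * rank g,  x |-> 4x+1,  x^-1 |-> 4x+2
   semigroup instance: s |-> 4 * rank s,  x |-> 4x+1,  separator |-> 2 *)
Definition gcode (a : gletter) : nat :=
  match a with
  | inl g => 4 * enum_rank g
  | inr (x, true) => 4 * x + 1
  | inr (x, false) => 4 * x + 2
  end.

Definition scode (a : option sletter) : nat :=
  match a with
  | None => 2
  | Some (inl s) => 4 * enum_rank s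
  | Some (inr x) => 4 * x + 1
  end.

End Semigroup.

Definition bits (w n : nat) : seq bool := mkseq (fun i => odd (n %/ 2 ^ i)) w.

(* encoding of a sequence of codes with block width w (w > 0, codes < 2^w):
   1^w 0 followed by the w-bit blocks *)
Definition enc (w : nat) (cs : seq nat) : seq bool :=
  nseq w true ++ false :: flatten (map (bits w) cs).

Definition EQN_SAT_group (S : finType) (op : S -> S -> S) (G : {set S})
    (x : seq bool) : Prop :=
  exists (w : nat) (a : seq (gletter S)),
    [/\ 0 < w, all (fun l => gcode l < 2 ^ w) a,
        all (fun l => if l is inl g then g \in G else true) a,
        x = enc w (map (@gcode S) a) & gsat op G a].

(* The language EQN-SAT(S) as a set of bit strings; the instance (u, v)
   is written u # v *)
Definition EQN_SAT_semigroup (S : finType) (op : S -> S -> S)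
    (x : seq bool) : Prop :=
  exists (w : nat) (u v : seq (sletter S)),
    let cs := map (@scode S) (map Some u ++ None :: map Some v) in
    [/\ 0 < w, all (fun c => c < 2 ^ w) cs, x = enc w cs & ssat op u v].

(* Boolean circuits with unbounded fan-in (as formulas; constant-depth  *)
(* polynomial-size circuits and formulas define the same class)         *)
Inductive circuit : Type :=
  | CIn of nat
  | CConst of bool
  | CNot of circuit
  | CAnd of seq circuit
  | COr of seq circuit.

Fixpoint ceval (x : seq bool) (c : circuit) : bool :=
  match c with
  | CIn i => nth false x i
  | CConst b => b
  | CNot c' => ~~ ceval x c'
  | CAnd cs => all (ceval x) cs
  | COr cs => has (ceval x) cs
  end.

Fixpoint csize (c : circuit) : nat :=
  match c with
  | CIn _ | CConst _ => 1
  | CNot c' => (csize c').+1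
  | CAnd cs | COr cs => (sumn (map csize cs)).+1
  end.

Fixpoint cdepth (c : circuit) : nat :=
  match c with
  | CIn _ | CConst _ => 0
  | CNot c' => (cdepth c').+1
  | CAnd cs | COr cs => (foldr maxn 0 (map cdepth cs)).+1
  end.

(* f is computable by a (non-uniform) family of polynomial-size,
   constant-depth circuits: for inputs of length n there are m n pairs of
   circuits (V n i, B n i); V n i decides whether i < |f x| and B n i gives
   bit i of f x. *)
Definition AC0_function (f : seq bool -> seq bool) : Prop :=
  exists (d k : nat) (m : nat -> nat) (V B : nat -> nat -> circuit),
    (forall n, \sum_(i < m n) (csize (V n i) + csize (B n i)) <= (n + 2) ^ k) /\
    (forall n i, i < m n -> cdepth (V n i) <= d /\ cdepth (B n i) <= d) /\
    (forall x : seq bool,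
       size (f x) <= m (size x) /\
       forall i, i < m (size x) ->
         ceval x (V (size x) i) = (i < size (f x)) /\
         (i < size (f x) -> ceval x (B (size x) i) = nth false (f x) i)).

Definition AC0_reducible (L1 L2 : seq bool -> Prop) : Prop :=
  exists f, AC0_function f /\ forall x, L1 x <-> L2 (f x).

(* Main.v *)
Require Import Defs.
From mathcomp Require Import all_boot zify.
Set Implicit Arguments. Unset Strict Implicit. Unset Printing Implicit Defensive.

Lemma bitsS w n : bits w.+1 n = odd n :: bits w n./2.
Proof.
rewrite /bits /mkseq /= expn0 divn1; congr (_ :: _).
rewrite (iotaDl 1 0) -map_comp; apply: eq_map => i /=.
by rewrite expnS divnMA divn2.
Qed.

Lemma size_bits w n : size (bits w n) = w.
Proof. by rewrite size_mkseq. Qed.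

Lemma nth_bits w n i : i < w -> nth false (bits w n) i = odd (n %/ 2 ^ i).
Proof. by move=> h; rewrite nth_mkseq. Qed.

Fixpoint fromBits (ds : seq bool) : nat :=
  if ds is d :: ds' then d + (fromBits ds').*2 else 0.

Lemma fromBits_bits w n : n < 2 ^ w -> fromBits (bits w n) = n.
Proof.
elim: w n => [|w IH] n hn.
  by move: hn; rewrite expn0 ltnS leqn0 => /eqP ->.
rewrite bitsS /= IH ?odd_double_half //.
by rewrite ltn_half_double -mul2n -expnS.
Qed.

Lemma bits_fromBits ds : bits (size ds) (fromBits ds) = ds.
Proof.
elim: ds => [|d ds IH] //=.
by rewrite bitsS half_bit_double IH oddD odd_double oddb addbF.
Qed.

Lemma fromBits_lt ds : fromBits ds < 2 ^ size ds.
Proof.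
elim: ds => [|d ds IH] //=; rewrite expnS.
have : d <= 1 by case: d.
lia.
Qed.

Lemma bits_inj w c c' : c < 2 ^ w -> c' < 2 ^ w -> bits w c = bits w c' -> c = c'.
Proof. by move=> h h' e; rewrite -(fromBits_bits h) -(fromBits_bits h') e. Qed.

Lemma size_flatten_const T k (ss : seq (seq T)) :
  all (fun s => size s == k) ss -> size (flatten ss) = k * size ss.
Proof.
elim: ss => [|s ss IH] /=; first by rewrite muln0.
by case/andP=> /eqP h /IH; rewrite size_cat h => ->; rewrite mulnS.
Qed.

Lemma nth_flatten_const T (x0 : T) k (ss : seq (seq T)) t r :
  all (fun s => size s == k) ss -> t < size ss -> r < k ->
  nth x0 (flatten ss) (t * k + r) = nth x0 (nth [::] ss t) r.
Proof.
elim: ss t => [|s ss IH] t //= /andP [/eqP hs hall] ht hr.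
rewrite nth_cat hs; case: t ht => [|t] ht /=; first by rewrite hr.
rewrite ifN; last by rewrite -leqNgt mulSn -addnA leq_addr.
by rewrite mulSn -addnA addKn IH.
Qed.

Lemma size_enc w cs : size (enc w cs) = w.+1 + w * size cs.
Proof.
rewrite /enc size_cat size_nseq /= (@size_flatten_const _ w) ?size_map ?addnS //.
by apply/allP=> s /mapP [c _ ->]; rewrite size_bits.
Qed.

Lemma nth_enc_pre w cs i : i < w -> nth false (enc w cs) i = true.
Proof. by move=> h; rewrite /enc nth_cat size_nseq h nth_nseq h. Qed.

Lemma nth_enc_w w cs : nth false (enc w cs) w = false.
Proof. by rewrite /enc nth_cat size_nseq ltnn subnn. Qed.

Lemma nth_enc_blk w cs t r : t < size cs -> r < w ->
  nth false (enc w cs) (w.+1 + (t * w + r)) = odd (nth 0 cs t %/ 2 ^ r).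
Proof.
move=> ht hr; rewrite /enc nth_cat size_nseq ifN; last by lia.
have -> : w.+1 + (t * w + r) - w = (t * w + r).+1 by lia.
rewrite /= nth_flatten_const ?size_map //; last first.
  by apply/allP=> s /mapP [c _ ->]; rewrite size_bits.
by rewrite (nth_map 0) // nth_bits.
Qed.

Lemma enc_inj w w' cs cs' : 0 < w -> 0 < w' ->
  all (fun c => c < 2 ^ w) cs -> all (fun c => c < 2 ^ w') cs' ->
  enc w cs = enc w' cs' -> w = w' /\ cs = cs'.
Proof.
move=> hw hw' hc hc' E.
have ew : w = w'.
  case: (ltngtP w w') => // h.
    by have := nth_enc_w w cs; rewrite E nth_enc_pre.
  by have := nth_enc_w w' cs'; rewrite -E nth_enc_pre.
subst w'; split => //.
move: E; rewrite /enc => /eqP; rewrite eqseq_cat ?size_nseq // eqxx /= => /eqP [].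
elim: cs cs' hc hc' => [|c cs IH] [|c' cs'] //=.
- move=> _ _ /(congr1 size); rewrite /= size_cat size_bits /=; lia.
- move=> _ _ /(congr1 size); rewrite /= size_cat size_bits /=; lia.
- case/andP=> h1 h2 /andP [h1' h2'] /eqP; rewrite eqseq_cat ?size_bits //.
  case/andP=> /eqP /(bits_inj h1 h1') -> /eqP /(IH _ h2 h2') -> //.
Qed.

Definition pos w t r := w.+1 + (t * w + r).
Definition blk (x : seq bool) w t := mkseq (fun r => nth false x (pos w t r)) w.
Definition bc x w t := fromBits (blk x w t).

Lemma bc_lt x w t : bc x w t < 2 ^ w.
Proof. by have := fromBits_lt (blk x w t); rewrite size_mkseq. Qed.

Lemma bc_bit x w t r : odd (bc x w t %/ 2 ^ r) = (r < w) && nth false x (pos w t r).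
Proof.
case: (ltnP r w) => hr /=.
  have := bits_fromBits (blk x w t); rewrite size_mkseq => /(congr1 (fun s => nth false s r)).
  by rewrite nth_bits // nth_mkseq.
rewrite divn_small //; apply: (leq_trans (bc_lt x w t)); exact: leq_pexp2l.
Qed.

Lemma bc_enc w cs t : all (fun c => c < 2 ^ w) cs -> t < size cs ->
  bc (enc w cs) w t = nth 0 cs t.
Proof.
move=> hall ht.
have hc : nth 0 cs t < 2 ^ w by apply: (allP hall); exact: mem_nth.
apply: (bits_inj (bc_lt _ _ _) hc); apply: (@eq_from_nth _ false); rewrite !size_bits // => r hr.
by rewrite !nth_bits // bc_bit hr /pos nth_enc_blk.
Qed.

Definition cbit w t r := if r < w then CIn (pos w t r) else CConst false.

Lemma ceval_cbit x w t r : ceval x (cbit w t r) = odd (bc x w t %/ 2 ^ r).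
Proof. by rewrite bc_bit /cbit; case: ifP. Qed.

Definition EQc w t c :=
  CAnd (mkseq (fun r => if odd (c %/ 2 ^ r) then CIn (pos w t r) else CNot (CIn (pos w t r))) w).

Lemma ceval_EQc x w t c : c < 2 ^ w -> ceval x (EQc w t c) = (bc x w t == c).
Proof.
move=> hc /=; rewrite all_map.
apply/idP/eqP => [/allP h | <-].
  apply: (bits_inj (bc_lt _ _ _) hc); apply: (@eq_from_nth _ false); rewrite !size_bits // => r hr.
  have := h r; rewrite mem_iota hr /= => /(_ isT).
  by rewrite !nth_bits // bc_bit hr /=; case: ifP => _ /= => [-> | /negbTE ->].
apply/allP=> r; rewrite mem_iota /= => hr.
rewrite bc_bit hr /=; case E: (nth false x (pos w t r)) => /=; by rewrite E.
Qed.

Definition prefix w := CAnd (CNot (CIn w) :: mkseq CIn w).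

Lemma ceval_prefix x w :
  ceval x (prefix w) = ~~ nth false x w && all (fun i => nth false x i) (iota 0 w).
Proof. by rewrite /= all_map. Qed.

Lemma prefix_enc w w' cs : 0 < w' -> ceval (enc w' cs) (prefix w) = (w == w').
Proof.
move=> hw'; rewrite ceval_prefix.
case: (ltngtP w w') => h.
- by rewrite nth_enc_pre.
- rewrite andbC; apply/negbTE/negP => /andP [/allP hh _].
  by have := hh w'; rewrite mem_iota h nth_enc_w /= => /(_ isT).
- subst; rewrite nth_enc_w /=; apply/allP=> i; rewrite mem_iota /= => hi.
  exact: nth_enc_pre.
Qed.

Lemma mod4 c : c %% 4 = odd c + 2 * odd (c %/ 2).
Proof.
have h1 := odd_double_half c; have h2 := odd_double_half (c./2).
rewrite divn2.
have : odd c <= 1 by case: odd.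
have : odd (c./2) <= 1 by case: odd.
move: h1 h2; rewrite -!muln2.
move: (odd c) (odd c./2) (c./2) (c./2./2) => o1 o2 h q; lia.
Qed.

Lemma seq_choice T (d : T) L (P : nat -> T -> Prop) :
  (forall t, t < L -> exists l, P t l) ->
  exists a : seq T, size a = L /\ forall t, t < L -> P t (nth d a t).
Proof.
elim: L => [|L IH] h; first by exists [::].
case: IH => [t ht|a [sa ha]]; first by apply: h; exact: ltnW.
case: (h L (ltnSn L)) => l hl.
exists (rcons a l); rewrite size_rcons sa; split => // t ht.
rewrite nth_rcons sa; case: ltngtP => htL.
- exact: ha.
- by move: ht; rewrite ltnS leqNgt htL.
- by subst.
Qed.

Arguments prefix : simpl never.
Arguments cbit : simpl never.
Arguments EQc : simpl never.

Lemma sumn_le (cs : seq circuit) k : all (fun c => csize c <= k) cs ->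
  sumn (map csize cs) <= size cs * k.
Proof.
elim: cs => [|c cs IH] //= /andP [h1 /IH h2]; rewrite mulSn; exact: leq_add.
Qed.

Lemma csize_CAnd cs k : all (fun c => csize c <= k) cs -> csize (CAnd cs) <= size cs * k + 1.
Proof. by move=> h; rewrite /= addn1 ltnS; apply: sumn_le. Qed.

Lemma csize_COr cs k : all (fun c => csize c <= k) cs -> csize (COr cs) <= size cs * k + 1.
Proof. by move=> h; rewrite /= addn1 ltnS; apply: sumn_le. Qed.

Lemma foldmax_le (l : seq nat) d : all (fun k => k <= d) l -> foldr maxn 0 l <= d.
Proof. by elim: l => [|k l IH] //= /andP [h1 /IH h2]; rewrite geq_max h1. Qed.

Lemma cdepth_CAnd cs d : all (fun c => cdepth c <= d) cs -> cdepth (CAnd cs) <= d.+1.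
Proof. by move=> h; rewrite /= ltnS; apply: foldmax_le; rewrite all_map. Qed.

Lemma cdepth_COr cs d : all (fun c => cdepth c <= d) cs -> cdepth (COr cs) <= d.+1.
Proof. by move=> h; rewrite /= ltnS; apply: foldmax_le; rewrite all_map. Qed.

Lemma sz_cbit w t r : csize (cbit w t r) = 1.
Proof. by rewrite /cbit; case: ifP. Qed.

Lemma dp_cbit w t r : cdepth (cbit w t r) = 0.
Proof. by rewrite /cbit; case: ifP. Qed.

Lemma sz_EQc w t c : csize (EQc w t c) <= w * 2 + 1.
Proof.
rewrite /EQc; apply: leq_trans (csize_CAnd (k := 2) _) _; last by rewrite size_mkseq.
by rewrite all_map; apply/allP=> r _ /=; case: ifP.
Qed.

Lemma dp_EQc w t c : cdepth (EQc w t c) <= 2.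
Proof.
rewrite /EQc; apply: (cdepth_CAnd (d := 1)).
by rewrite all_map; apply/allP=> r _ /=; case: ifP.
Qed.

Lemma sz_prefix w : csize (prefix w) = w + 3.
Proof.
rewrite /prefix /= /mkseq -map_comp.
have -> : sumn (map (csize \o CIn) (iota 0 w)) = w.
  rewrite (@eq_map _ _ _ (fun _ => 1)) // -[w in RHS](size_iota 0 w).
  by elim: (iota 0 w) => //= ? ? ->.
lia.
Qed.

Lemma dp_prefix w : cdepth (prefix w) <= 2.
Proof.
rewrite /prefix; apply: (cdepth_CAnd (d := 1)) => /=; rewrite all_map.
by apply/allP.
Qed.

Lemma bmul X a b i j : a <= X ^ i -> b <= X ^ j -> a * b <= X ^ (i + j).
Proof. by move=> h1 h2; rewrite expnD; exact: leq_mul. Qed.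

Lemma badd X a b i : 2 <= X -> a <= X ^ i -> b <= X ^ i -> a + b <= X ^ i.+1.
Proof.
move=> hX h1 h2; rewrite expnS; apply: leq_trans (leq_add h1 h2) _.
by rewrite addnn -mul2n leq_mul2r hX orbT.
Qed.

Lemma blift X a i j : 0 < X -> a <= X ^ i -> i <= j -> a <= X ^ j.
Proof. by move=> hX h hij; apply: leq_trans h _; rewrite leq_pexp2l. Qed.

Lemma bone X a : a <= X -> a <= X ^ 1.
Proof. by rewrite expn1. Qed.

Lemma Pbound n s X : n + s + 30 <= X ->
  1 + (n * ((n + 1) * (n + 10 + s * (n * 2 + 1)) + 1) + 1 + (n * (n + 24) + 1)) <= X ^ 12.
Proof.
move=> h.
have X2 : 2 <= X by lia. have X0 : 0 < X by lia.
have hn : n <= X ^ 1 by apply: bone; lia.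
have hs : s <= X ^ 1 by apply: bone; lia.
have c : forall k, k <= 30 -> k <= X ^ 1 by move=> k hk; apply: bone; lia.
have e1 : n * 2 + 1 <= X ^ 3.
  apply: badd => //; first exact: bmul hn (c 2 isT).
  by apply: (blift (j := 2) X0 (c 1 isT)).
have e2 : s * (n * 2 + 1) <= X ^ 4 := bmul hs e1.
have e3 : n + 10 <= X ^ 2 := badd X2 hn (c 10 isT).
have e4 : n + 10 + s * (n * 2 + 1) <= X ^ 5 := badd X2 (blift (j := 4) X0 e3 isT) e2.
have e5 : n + 1 <= X ^ 2 := badd X2 hn (c 1 isT).
have e6 := bmul e5 e4.
have e7 : (n + 1) * (n + 10 + s * (n * 2 + 1)) + 1 <= X ^ 8 := badd X2 e6 (blift (j := 7) X0 (c 1 isT) isT).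
have e8 := bmul hn e7.
have e9 : n * ((n + 1) * (n + 10 + s * (n * 2 + 1)) + 1) + 1 <= X ^ 10 := badd X2 e8 (blift (j := 9) X0 (c 1 isT) isT).
have f1 : n + 24 <= X ^ 2 := badd X2 hn (c 24 isT).
have f2 := bmul hn f1.
have f3 : n * (n + 24) + 1 <= X ^ 4 := badd X2 f2 (blift (j := 3) X0 (c 1 isT) isT).
have g1 := badd X2 e9 (blift (j := 10) X0 f3 isT).
exact: badd X2 (blift (j := 11) X0 (c 1 isT) isT) g1.
Qed.

Lemma lenbound n s K X : n + s + K + 30 <= X ->
  (n + s + 2).+1 + (n + s + 2) * (K * n + 3) <= X ^ 7.
Proof.
move=> h.
have X2 : 2 <= X by lia. have X0 : 0 < X by lia.
have hn : n <= X ^ 1 by apply: bone; lia.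
have c : forall k, k <= X -> k <= X ^ 1 by move=> k hk; apply: bone.
have w1 : n + s + 2 <= X ^ 1 by apply: c; lia.
have w2 : (n + s + 2).+1 <= X ^ 1 by apply: c; lia.
have k1 : K * n <= X ^ 2 := bmul (c K ltac:(lia)) hn.
have k2 : K * n + 3 <= X ^ 3 := badd X2 k1 (blift (j := 2) X0 (c 3 ltac:(lia)) isT).
have k3 := bmul w1 k2.
exact: (badd X2 (blift (j := 6) X0 w2 isT) (blift (j := 6) X0 k3 isT)).
Qed.

Lemma Xbound n c : n + c <= (n + 2) ^ c.+1.
Proof.
rewrite expnSr; have h1 : c < 2 ^ c := ltn_expl c (isT : 1 < 2).
have h2 : 2 ^ c <= (n + 2) ^ c.
  by elim: (c) => // k IH; rewrite !expnS; apply: leq_mul => //; rewrite leq_addl.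
have h3 : (c + 1) * (n + 2) <= (n + 2) ^ c * (n + 2).
  by rewrite leq_mul2r; apply/orP; right; rewrite addn1; exact: leq_trans h1 h2.
apply: leq_trans h3; rewrite mulnDl mul1n.
have : c <= c * (n + 2) by rewrite leq_pmulr // addn2.
lia.
Qed.

Section Alg.
Variables (S : finType) (op : S -> S -> S) (op_assoc : associative op)
  (G : {set S}) (e : S) (HG : maximal_subgroup op G) (He : is_identity_of op G e).

Definition Msh := [set z | (op e z == z) && (op z e == z)].
Definition Ush := [set z in Msh | [exists t in Msh, (op z t == e) && (op t z == e)]].

Lemma inMsh z : (z \in Msh) = (op e z == z) && (op z e == z).
Proof. by rewrite inE. Qed.

Lemma eMsh : e \in Msh.
Proof. by case: He => eG /(_ e eG) [h _]; rewrite inMsh h eqxx. Qed.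

Lemma ee : op e e = e.
Proof. by move: eMsh; rewrite inMsh => /andP [/eqP]. Qed.

Lemma MshM a b : a \in Msh -> b \in Msh -> op a b \in Msh.
Proof.
rewrite !inMsh => /andP [/eqP h1 /eqP h2] /andP [/eqP h3 /eqP h4].
by rewrite op_assoc h1 -op_assoc h4 !eqxx.
Qed.

Lemma rinv_comm z t : z \in Msh -> t \in Msh -> op z t = e -> op t z = e.
Proof.
move=> zM tM zt.
pose f := op t.
have fM : {in Msh, forall m, f m \in Msh} by move=> m mM; exact: MshM.
have finj : {in Msh &, injective f}.
  move=> m1 m2 m1M m2M /(congr1 (op z)); rewrite /f !op_assoc zt.
  by move: m1M m2M; rewrite !inMsh => /andP [/eqP -> _] /andP [/eqP -> _].
have eq : [set f m | m in Msh] = Msh.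
  apply/eqP; rewrite eqEcard card_in_imset // leqnn andbT.
  by apply/subsetP=> y /imsetP [m mM ->]; exact: fM.
have : e \in [set f m | m in Msh] by rewrite eq eMsh.
case/imsetP=> c cM ec.
have zc : z = c.
  move: zM cM; rewrite !inMsh => /andP [_ /eqP h] /andP [/eqP h' _].
  have : op z (f c) = op z e by rewrite -ec.
  by rewrite /f op_assoc zt h' h.
by rewrite zc ec.
Qed.

Lemma inUsh z : z \in Ush -> z \in Msh /\ exists2 t, t \in Ush & op z t = e /\ op t z = e.
Proof.
rewrite inE => /andP [zM /existsP [t /andP [tM /andP [/eqP h1 /eqP h2]]]].
split => //; exists t => //.
by rewrite inE tM; apply/existsP; exists z; rewrite zM h1 h2 !eqxx.
Qed.

Lemma Ush_intro z t : z \in Msh -> t \in Msh -> op z t = e -> z \in Ush.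
Proof.
move=> zM tM zt; rewrite inE zM; apply/existsP; exists t.
by rewrite tM zt (rinv_comm zM tM zt) !eqxx.
Qed.

Lemma UshM a b : a \in Ush -> b \in Ush -> op a b \in Ush.
Proof.
case/inUsh=> aM [a' a'U [h1 h2]] /inUsh [bM [b' b'U [h3 h4]]].
have a'M := (inUsh a'U).1; have b'M := (inUsh b'U).1.
apply: (@Ush_intro _ (op b' a')); rewrite ?MshM //.
rewrite -op_assoc (op_assoc b) h3.
by move: a'M; rewrite inMsh => /andP [/eqP -> _].
Qed.

Lemma Ush_subgroup : is_subgroup op Ush.
Proof.
split; first exact: UshM.
exists e; split.
  split; first exact: (@Ush_intro _ e eMsh eMsh ee).
  by move=> g /inUsh [] ; rewrite inMsh => /andP [/eqP -> /eqP ->].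
by move=> g /inUsh [_ [t tU [h1 h2]]]; exists t.
Qed.

Lemma GinMsh g : g \in G -> g \in Msh.
Proof. by move=> gG; case: He => _ /(_ g gG) [h1 h2]; rewrite inMsh h1 h2 !eqxx. Qed.

Lemma G_sub_Ush : G \subset Ush.
Proof.
apply/subsetP=> g gG; case: HG => [[_ [e' [[e'G He'] hinv]]] _].
have e'e : e' = e.
  case: He => eG /(_ e' e'G) [h1 _]; case: (He' e eG) => _ <-; by rewrite h1.
subst e'.
case: (hinv g gG) => h hG [gh hg].
exact: (Ush_intro (GinMsh gG) (GinMsh hG) gh).
Qed.

Lemma Ush_eq : Ush = G.
Proof. by case: HG => _ /(_ _ Ush_subgroup G_sub_Ush). Qed.

Lemma foldr_Msh zs : all (fun z => z \in Msh) zs -> foldr op e zs \in Msh.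
Proof. by elim: zs => [|z zs IH] /= ; [rewrite eMsh | case/andP=> h /IH; exact: MshM]. Qed.

Lemma prod_unit zs : all (fun z => z \in Msh) zs -> foldr op e zs \in G ->
  all (fun z => z \in G) zs.
Proof.
rewrite -Ush_eq; elim: zs => [|z zs IH] //= /andP [zM hall] hU.
have PM := foldr_Msh hall.
case/inUsh: hU => _ [w' w'U [h1 h2]].
have w'M := (inUsh w'U).1.
have zU : z \in Ush.
  apply: (@Ush_intro _ (op (foldr op e zs) w')) => //; first exact: MshM.
  by rewrite op_assoc.
rewrite zU /=; apply: IH => //.
case/inUsh: zU => _ [zi ziU [z1 z2]].
have -> : foldr op e zs = op zi (op z (foldr op e zs)).
  by rewrite op_assoc z2; move: PM; rewrite inMsh => /andP [/eqP -> _].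
apply: UshM => //; apply: (@Ush_intro _ w') => //.
exact: MshM.
Qed.


Definition pw y k := iter k (op y) e.

Lemma pw_Msh y k : y \in Msh -> pw y k \in Msh.
Proof. by move=> yM; elim: k => [|k IH] /=; [exact: eMsh | exact: MshM]. Qed.

Lemma pwD y a b : y \in Msh -> pw y (a + b) = op (pw y a) (pw y b).
Proof.
move=> yM; elim: a => [|a IH] /=.
  by move: (pw_Msh b yM); rewrite inMsh => /andP [/eqP -> _].
by rewrite IH op_assoc.
Qed.

Lemma pwS_r y k : y \in Msh -> pw y k.+1 = op (pw y k) y.
Proof.
move=> yM; rewrite -addn1 pwD //= .
by move: yM; rewrite inMsh => /andP [_ /eqP ->].
Qed.

Lemma GM a b : a \in G -> b \in G -> op a b \in G.
Proof. by case: HG => [[h _] _]; exact: h. Qed.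

Lemma eG : e \in G.
Proof. by case: He. Qed.

Lemma pw_G y k : y \in G -> pw y k \in G.
Proof. by move=> yG; elim: k => [|k IH] /=; [exact: eG | exact: GM]. Qed.

Lemma G_inv y : y \in G -> exists2 h, h \in G & op y h = e /\ op h y = e.
Proof.
case: HG => [[_ [e' [[e'G He'] hinv]]] _].
have e'e : e' = e.
  case: He => eG' /(_ e' e'G) [h1 _]; case: (He' e eG') => _ <-; by rewrite h1.
by subst e'; exact: hinv.
Qed.

Lemma pw_order y : y \in G -> exists2 d, 0 < d <= #|S| & pw y d = e.
Proof.
move=> yG; have yM := GinMsh yG.
pose f (i : 'I_#|S|.+1) := pw y i.
have : ~~ injectiveb f.
  apply/negP=> /injectiveP /leq_card; rewrite card_ord ltnn //.
case/injectivePn=> i [j nij fij].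
case: (G_inv yG) => h hG [yh hy].
have canc : forall a d, pw y (a + d) = pw y a -> pw y d = e.
  elim=> [|a IH] d //=.
  move=> E; apply: IH; have := congr1 (op h) E.
  rewrite !op_assoc hy.
  move: (pw_Msh (a + d) yM) (pw_Msh a yM); rewrite !inMsh.
  by case/andP=> /eqP -> _ /andP [/eqP -> _].
case: (ltngtP i j) => hij.
- exists (j - i); first by have := ltn_ord j; lia.
  apply: (canc i); rewrite subnKC ?(ltnW hij) //.
- exists (i - j); first by have := ltn_ord i; lia.
  apply: (canc j); rewrite subnKC ?(ltnW hij) //.
- by move: nij; rewrite (val_inj hij) eqxx.
Qed.

Definition NN := 2 * #|S|`!.

Lemma pw_mul y d q : y \in Msh -> pw y d = e -> pw y (d * q) = e.
Proof.
move=> yM hd; elim: q => [|q IH]; first by rewrite muln0.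
by rewrite mulnS pwD // hd IH ee.
Qed.

Lemma pw_NN y : y \in G -> pw y NN = e.
Proof.
move=> yG; case: (pw_order yG) => d hd hde.
have : d %| NN by rewrite /NN dvdn_mull // dvdn_fact.
case/dvdnP=> q ->; rewrite mulnC; exact: pw_mul (GinMsh yG) hde.
Qed.

Lemma NN_gt1 : 1 < NN.
Proof. by rewrite /NN; have := fact_gt0 #|S|; lia. Qed.

Lemma ginv_pw y : y \in G -> ginv op G e y = pw y NN.-1.
Proof.
move=> yG; have yM := GinMsh yG.
have pG := pw_G NN.-1 yG.
have h1 : op y (pw y NN.-1) = e.
  by rewrite -[op _ _]/(pw y NN.-1.+1) prednK ?pw_NN //; have := NN_gt1; lia.
have h2 : op (pw y NN.-1) y = e.
  by rewrite -pwS_r // prednK ?pw_NN //; have := NN_gt1; lia.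
rewrite /ginv; case: pickP => [h /andP [hG /andP [/eqP yh /eqP hy]] | /(_ (pw y NN.-1))] /=.
  have := congr1 (op h) h1; rewrite op_assoc hy.
  move: (GinMsh pG) (GinMsh hG); rewrite !inMsh => /andP [/eqP -> _] /andP [_ /eqP ->].
  by [].
by rewrite pG h1 h2 eqxx.
Qed.


Definition MM := NN.-1.
Definition KK := 3 * MM.

Lemma MM_gt0 : 0 < MM.
Proof. by rewrite /MM; have := NN_gt1; lia. Qed.

Definition tr (l : gletter S) : seq (sletter S) :=
  match l with
  | inl g => inl g :: nseq KK.-1 (inl e)
  | inr (x, true) => [:: inl e; inr x; inl e] ++ nseq (KK - 3) (inl e)
  | inr (x, false) => flatten (nseq MM [:: inl e; inr x; inl e])
  end.

Lemma size_tr l : size (tr l) = KK.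
Proof.
have := MM_gt0.
case: l => [g|[x []]] h; rewrite /tr.
- rewrite [size _]/size -/(size _) size_nseq prednK //; rewrite /KK; lia.
- rewrite size_cat size_nseq; change (3 + (KK - 3) = KK); rewrite /KK; lia.
- rewrite (@size_flatten_const _ 3); first by rewrite size_nseq /KK.
  by apply/allP=> s /nseqP [->].
Qed.

Lemma MME : MM = NN.-1. Proof. by []. Qed.
Lemma KKE : KK = 3 * MM. Proof. by []. Qed.
Opaque KK MM.

Definition uu (a : seq (gletter S)) n : seq (sletter S) :=
  inl e :: (flatten (map tr a) ++ nseq (KK * (n - size a)) (inl e)).
Definition vv : seq (sletter S) := [:: inl e].
Definition ocs a n := map (@scode S) (map Some (uu a n) ++ None :: map Some vv).

Definition yy (s : S) := op (op e s) e.

Definition nu (sigma : nat -> S) (l : gletter S) : S :=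
  match l with
  | inl g => g
  | inr (x, true) => yy (sigma x)
  | inr (x, false) => pw (yy (sigma x)) MM
  end.

Definition constsG (a : seq (gletter S)) :=
  all (fun l => if l is inl g then g \in G else true) a.

Section Fold.
Variable sigma : nat -> S.
Definition step acc (b : sletter S) := op acc (Defs.sval sigma b).

Lemma ee' : op e e = e.
Proof. exact: ee. Qed.

Lemma yyM s : yy s \in Msh.
Proof. by rewrite inMsh /yy -!op_assoc ee' !op_assoc ee' !eqxx. Qed.

Lemma nuM l : (l = l) -> (if l is inl g then g \in G else true) -> nu sigma l \in Msh.
Proof.
case: l => [g|[x []]] //= _ h; first exact: GinMsh h.
  exact: yyM.
exact: pw_Msh _ (yyM _).
Qed.

Lemma fold_nseq acc k : op acc e = acc -> foldl step acc (nseq k (inl e)) = acc.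
Proof.
move=> h; elim: k => //= k IH.
by have -> : step acc (inl e) = acc by rewrite /step /= h.
Qed.

Lemma fold_blocks acc k x : op acc e = acc ->
  foldl step acc (flatten (nseq k [:: inl e; inr x; inl e])) = op acc (pw (yy (sigma x)) k).
Proof.
elim: k acc => [|k IH] acc h /=; first by rewrite h.
have -> : step (step (step acc (inl e)) (inr x)) (inl e) = op acc (yy (sigma x)).
  by rewrite /step /yy /= !op_assoc.
rewrite IH; last by rewrite /yy -!op_assoc ee'.
by rewrite -op_assoc.
Qed.

Definition constl (l : gletter S) := if l is inl g then g \in G else true.

Lemma nuM' l : constl l -> nu sigma l \in Msh.
Proof. by move=> h; apply: nuM. Qed.

Lemma fold_tr acc l : op acc e = acc -> constl l ->
  foldl step acc (tr l) = op acc (nu sigma l).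
Proof.
move=> hacc hl; have := nuM' hl; rewrite inMsh => /andP [_ /eqP nue].
case: l hl nue => [g|[x []]] hl nue; rewrite /tr.
- rewrite [foldl _ _ _]/= fold_nseq // /step /= -op_assoc.
  by move: nue; rewrite /nu => ->.
- rewrite foldl_cat [foldl _ _ [:: _; _; _]]/= fold_nseq.
    by rewrite /step /yy /= !op_assoc.
  by rewrite /step /= -!op_assoc ee'.
- by rewrite fold_blocks.
Qed.

Lemma fold_flat acc a : op acc e = acc -> constsG a ->
  foldl step acc (flatten (map tr a)) = foldl (fun acc l => op acc (nu sigma l)) acc a.
Proof.
elim: a acc => [|l a IH] acc h //= /andP [hl ha].
rewrite foldl_cat fold_tr // IH //.
have := nuM' hl; rewrite inMsh => /andP [_ /eqP nue].
by rewrite -op_assoc nue.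
Qed.

Lemma foldl_foldr acc a : op acc e = acc -> constsG a ->
  foldl (fun acc l => op acc (nu sigma l)) acc a = op acc (foldr op e (map (nu sigma) a)).
Proof.
elim: a acc => [|l a IH] acc h; first by rewrite /= h.
case/andP=> hl ha /=.
rewrite IH ?op_assoc //.
have := nuM' hl; rewrite inMsh => /andP [_ /eqP nue].
by rewrite -op_assoc nue.
Qed.

Lemma all_nuM a : constsG a -> all (fun z => z \in Msh) (map (nu sigma) a).
Proof.
by elim: a => [|l a IH] //= /andP [hl ha]; rewrite nuM' // IH.
Qed.

Lemma seval_uu a n : constsG a ->
  seval op sigma (uu a n) = Some (foldr op e (map (nu sigma) a)).
Proof.
move=> ha; rewrite /uu /seval -/step.
have PM := foldr_Msh (all_nuM ha).
move: (PM); rewrite inMsh => /andP [/eqP eP /eqP Pe].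
rewrite foldl_cat fold_flat ?ee' // foldl_foldr ?ee' // eP fold_nseq //.
Qed.

End Fold.

Lemma seval_vv sigma : seval op sigma vv = Some e.
Proof. by []. Qed.

Lemma pw_nseq y k : pw y k = foldr op e (nseq k y).
Proof. by elim: k => //= k ->. Qed.

Lemma id_uniq e' : is_identity_of op G e' -> e' = e.
Proof.
case=> e'G He'; case: He => eG /(_ e' e'G) [h1 _]; case: (He' e eG) => _ <-; by rewrite h1.
Qed.

Lemma dir1 a n : constsG a -> gsat op G a -> ssat op (uu a n) vv.
Proof.
move=> ha [e' [/id_uniq -> [sigma [sG sa]]]].
exists sigma, e; split => //; rewrite seval_uu //; congr Some.
rewrite -[in RHS]sa /geval.
elim: a ha {sa} => [|l a IH] //= /andP [hl ha]; rewrite IH //; congr (op _ _).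
case: l hl => [g|[x []]] //= _.
- rewrite /yy; have := GinMsh (sG x); rewrite inMsh => /andP [/eqP -> /eqP ->] //.
- rewrite ginv_pw // MME; congr pw.
  by rewrite /yy; have := GinMsh (sG x); rewrite inMsh => /andP [/eqP -> /eqP ->] //.
Qed.

Lemma dir2 a n : constsG a -> ssat op (uu a n) vv -> gsat op G a.
Proof.
move=> ha [sigma' [s [hu hv]]].
move: hv; rewrite seval_vv => -[es]; subst s.
move: hu; rewrite seval_uu // => -[hP].
have hallG : all (fun z => z \in G) (map (nu sigma') a).
  by apply: prod_unit; [exact: all_nuM | rewrite hP; exact: eG].
exists e; split => //.
pose sigma x := if yy (sigma' x) \in G then yy (sigma' x) else e.
exists sigma; split.
  by move=> x; rewrite /sigma; case: ifP => // _; exact: eG.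
rewrite -[RHS]hP /geval.
elim: a ha hallG {hP} => [|l a IH] //= /andP [hl ha] /andP [hlG haG].
rewrite IH //; congr (op _ _).
case: l hl hlG => [g|[x []]] //= _ hlG.
- by rewrite /sigma hlG.
- have yG : yy (sigma' x) \in G.
    move: hlG; rewrite pw_nseq => /(prod_unit _).
    have := MM_gt0; case: MM => // m _.
    by rewrite /= => /(_ _) /andP [] //; rewrite yyM /=; apply/allP=> z /nseqP [-> _]; exact: yyM.
  by rewrite /sigma yG ginv_pw // MME.
Qed.


Definition Gcodes w := [seq g <- enum G | 4 * enum_rank g < 2 ^ w].

Definition bval w t := COr [:: CAnd [:: cbit w t 0; CNot (cbit w t 1)];
  CAnd [:: CNot (cbit w t 0); cbit w t 1];
  COr (map (fun g => EQc w t (4 * enum_rank g)) (Gcodes w))].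

Definition codeok c := (c %% 4 == 1) || (c %% 4 == 2) ||
  has (fun g => c == 4 * enum_rank g) (enum G).

Lemma ceval_bval x w t : ceval x (bval w t) = codeok (bc x w t).
Proof.
rewrite /bval /codeok [ceval _ _]/= !ceval_cbit expn0 expn1 divn1 mod4 !andbT orbF.
rewrite -orbA; congr (_ || (_ || _)).
- by case: odd; case: odd.
- by case: odd; case: odd.
rewrite has_map /Gcodes; apply/hasP/hasP => [[g] | [g gG /eqP hg]].
  rewrite mem_filter => /andP [hw gG] hg; exists g => //.
  by move: hg; change (ceval x (EQc w t (4 * enum_rank g)) -> bc x w t == 4 * enum_rank g); rewrite ceval_EQc.
exists g; first by rewrite mem_filter gG -hg bc_lt.
by change (ceval x (EQc w t (4 * enum_rank g))); rewrite ceval_EQc -hg ?bc_lt.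
Qed.

Lemma codeok_letter c : codeok c -> exists l, gcode l = c /\ constl l.
Proof.
case/orP => [/orP [] h | /hasP [g gG /eqP ->]].
- exists (inr (c %/ 4, true)); split => //=.
  move/eqP: h; have := divn_eq c 4; lia.
- exists (inr (c %/ 4, false)); split => //=.
  move/eqP: h; have := divn_eq c 4; lia.
- by exists (inl g); split => //=; rewrite /constl -mem_enum.
Qed.

Lemma gcode_codeok l : constl l -> codeok (gcode l).
Proof.
case: l => [g|[x []]] /= h; rewrite /codeok.
- apply/orP; right; apply/hasP; exists g; first by rewrite mem_enum.
  by [].
- by apply/orP; left; apply/orP; left; apply/eqP; lia.
- by apply/orP; left; apply/orP; right; apply/eqP; lia.
Qed.

Lemma ceval_CAnd x cs : ceval x (CAnd cs) = all (ceval x) cs.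
Proof. by []. Qed.
Lemma ceval_COr x cs : ceval x (COr cs) = has (ceval x) cs.
Proof. by []. Qed.

Lemma all_cons' T (p : T -> bool) y ys : all p (y :: ys) = p y && all p ys.
Proof. by []. Qed.

Definition Lw n w := (n - w.+1) %/ w.
Definition validc n := COr (map (fun w => CAnd (prefix w :: mkseq (bval w) (Lw n w)))
  [seq w <- iota 1 n | (w < n) && (w %| (n - w.+1))]).

Definition goodenc x w a := [/\ 0 < w, all (fun l => gcode l < 2 ^ w) a, constsG a &
  x = enc w (map (@gcode S) a)].

Lemma Lw_enc w cs : 0 < w -> Lw (size (enc w cs)) w = size cs.
Proof. by move=> hw; rewrite /Lw size_enc addKn mulKn. Qed.

Lemma valid_complete x w a : goodenc x w a -> ceval x (validc (size x)).
Proof.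
case=> hw hc ha ->.
rewrite /validc ceval_COr has_map; apply/hasP; exists w.
  rewrite mem_filter mem_iota size_enc size_map hw /=.
  rewrite addKn dvdn_mulr // andbT; apply/andP; split; lia.
rewrite /preim; change (ceval (enc w (map (@gcode S) a)) (CAnd (prefix w :: mkseq (bval w) (Lw (size (enc w (map (@gcode S) a))) w)))).
rewrite ceval_CAnd all_cons' prefix_enc // eqxx /= all_map; apply/allP=> t; rewrite Lw_enc // mem_iota /= => ht.
rewrite size_map in ht; rewrite /preim; change (ceval (enc w (map (@gcode S) a)) (bval w t)); rewrite ceval_bval bc_enc ?size_map //; last by rewrite all_map.
rewrite (nth_map (inl e)) //; apply: gcode_codeok.
by apply: (allP ha); exact: mem_nth.
Qed.

Lemma valid_sound x : ceval x (validc (size x)) -> exists w a, goodenc x w a.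
Proof.
rewrite /validc ceval_COr has_map => /hasP [w].
rewrite mem_filter mem_iota => /andP [/andP [hwn hdiv] /andP [hw _]].
rewrite /preim => hh; have : ceval x (CAnd (prefix w :: mkseq (bval w) (Lw (size x) w))) := hh; clear hh.
rewrite ceval_CAnd all_cons' => /andP [hpre]; rewrite all_map => /allP hblk.
have hok : forall t, t < Lw (size x) w -> exists l, gcode l = bc x w t /\ constl l.
  move=> t ht; apply: codeok_letter; rewrite -ceval_bval.
  by have := hblk t; rewrite mem_iota /= => /(_ ht).
case: (seq_choice (inl e) hok) => a [sa ha].
exists w, a; split => //.
- apply/allP=> l /(nthP (inl e)) [t ht <-]; rewrite sa in ht; rewrite (ha t ht).1; exact: bc_lt.
- apply/allP=> l /(nthP (inl e)) [t ht <-]; rewrite sa in ht; exact: (ha t ht).2.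
have hsz : size x = w.+1 + w * size a.
  by rewrite sa /Lw mulnC divnK //; lia.
move: hpre; rewrite ceval_prefix => /andP [hw0 /allP hpre].
apply: (@eq_from_nth _ false); first by rewrite size_enc size_map hsz.
move=> i hi; case: (ltngtP i w) => hiw.
- by rewrite nth_enc_pre //; apply: hpre; rewrite mem_iota.
- have hj : i - w.+1 < w * size a by lia.
  have -> : i = pos w ((i - w.+1) %/ w) ((i - w.+1) %% w).
    by rewrite /pos -divn_eq; lia.
  rewrite /pos nth_enc_blk ?size_map ?ltn_pmod //; last by rewrite ltn_divLR // mulnC.
  rewrite (nth_map (inl e)); last by rewrite ltn_divLR // mulnC.
  rewrite (ha _ _).1 ?bc_bit ?ltn_pmod //.
  by rewrite -sa ltn_divLR // mulnC.
- by subst; rewrite nth_enc_w; apply/negbTE.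
Qed.


Definition ce := 4 * enum_rank e.
Definition WW n := n + #|S| + 2.
Definition len n := (WW n).+1 + WW n * (KK * n + 3).

Definition letbit w t s r :=
  let b0 := cbit w t 0 in let b1 := cbit w t 1 in
  let ceb := CConst (odd (ce %/ 2 ^ r)) in
  COr [:: CAnd [:: CNot b0; CNot b1; if s == 0 then cbit w t r else ceb];
          CAnd [:: b0; CNot b1; if s == 1 then cbit w t r else ceb];
          CAnd [:: CNot b0; b1; if s %% 3 == 1 then
             (if r == 0 then CConst true else if r == 1 then CConst false else cbit w t r)
             else ceb]].

Lemma div4 x a r : a < 4 -> 1 < r -> (4 * x + a) %/ 2 ^ r = x %/ 2 ^ (r - 2).
Proof.
move=> ha hr; have -> : 2 ^ r = 4 * 2 ^ (r - 2) by rewrite -{1}(subnKC hr) expnD.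
by rewrite divnMA; congr (_ %/ _); lia.
Qed.

Lemma KK_gt0 : 0 < KK.
Proof. by rewrite KKE; have := MM_gt0; lia. Qed.

Lemma nth_tr_inv x s : s < KK ->
  nth (inl e) (tr (inr (x, false))) s = if s %% 3 == 1 then inr x else inl e.
Proof.
move=> hs; rewrite /tr (divn_eq s 3) nth_flatten_const ?size_nseq ?ltn_pmod //.
- rewrite nth_nseq ifT; last by rewrite ltn_divLR // mulnC -KKE.
  rewrite modnMDl modn_mod.
  by have := ltn_pmod s (isT : 0 < 3); case: (s %% 3) => [|[|[|]]].
- by apply/allP => z /nseqP [->].
- by rewrite ltn_divLR // mulnC -KKE.
Qed.

Lemma letbit_ok x w t s r l : bc x w t = gcode l -> s < KK ->
  ceval x (letbit w t s r) = odd (scode (Some (nth (inl e) (tr l) s)) %/ 2 ^ r).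
Proof.
move=> hbc hs; rewrite /letbit ceval_COr /= !ceval_cbit hbc expn0 expn1 divn1.
case: l hbc => [g|[y []]] hbc /=.
- have h1 : odd (4 * enum_rank g) = false by rewrite oddM.
  have h2 : (4 * enum_rank g) %/ 2 = 2 * enum_rank g by lia.
  rewrite h1 h2 oddM /= !andbT orbF.
  case: eqP => [-> | hs0] /=; first by rewrite ceval_cbit hbc.
  case: s hs hs0 => [|s] // hs _ /=.
  by rewrite nth_nseq; case: ifP.
- have h1 : odd (4 * y + 1) by rewrite oddD oddM.
  have h2 : (4 * y + 1) %/ 2 = 2 * y by lia.
  rewrite h1 h2 oddM /= orbF andbT.
  case: eqP => [-> | hs1] /=; first by rewrite ceval_cbit hbc.
  case: s hs hs1 => [|[|[|s]]] //= hs _.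
  by rewrite nth_nseq; case: ifP.
- have h1 : ~~ odd (4 * y + 2) by rewrite oddD oddM.
  have h2 : (4 * y + 2) %/ 2 = 2 * y + 1 by lia.
  have o3 : odd (2 * y + 1) = true by rewrite oddD oddM.
  rewrite (negbTE h1) h2 o3 /= andbT orbF.
  have E := nth_tr_inv y hs; rewrite /tr in E; rewrite E.
  case: eqP => [hs1 | hs1] /=; last by [].
  have o4 : odd (4 * y + 1) = true by rewrite oddD oddM.
  have h5 : (4 * y + 1) %/ 2 = 2 * y by lia.
  have o5 : odd (2 * y) = false by rewrite oddM.
  case: (ltngtP r 1) => hr.
  - have -> : r = 0 by lia.
    by rewrite expn0 divn1 o4.
  - have -> : (r == 0) = false by apply/eqP; lia.
    by rewrite ceval_cbit hbc /= !div4.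
  - by subst r; rewrite /= expn1 h5 o5.
Qed.

Definition obit n w i :=
  if i < WW n then CConst true else if i == WW n then CConst false else
  let j := i - (WW n).+1 in let q := j %/ WW n in let r := j %% WW n in
  if q == 0 then CConst (odd (ce %/ 2 ^ r))
  else if q <= KK * n then
    (if q.-1 %/ KK < Lw n w then letbit w (q.-1 %/ KK) (q.-1 %% KK) r
     else CConst (odd (ce %/ 2 ^ r)))
  else if q == (KK * n).+1 then CConst (odd (2 %/ 2 ^ r))
  else CConst (odd (ce %/ 2 ^ r)).

Definition BB n i := if i == 0 then validc n else
  COr (map (fun w => CAnd [:: prefix w; obit n w i]) (iota 1 n)).

Lemma size_flat_tr a : size (flatten (map tr a)) = KK * size a.
Proof.
rewrite (@size_flatten_const _ KK) ?size_map //.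
by apply/allP=> z /mapP [l _ ->]; rewrite size_tr.
Qed.

Lemma size_uu a n : size a <= n -> size (uu a n) = (KK * n).+1.
Proof.
move=> h; rewrite /uu /= size_cat size_nseq size_flat_tr -mulnDr subnKC //.
Qed.

Lemma size_ocs a n : size a <= n -> size (ocs a n) = KK * n + 3.
Proof.
move=> h; rewrite /ocs size_map size_cat size_map size_uu //.
have -> : size (None :: map Some vv) = 2 by [].
lia.
Qed.

Lemma nth_ocs a n q : size a <= n -> q < KK * n + 3 ->
  nth 0 (ocs a n) q =
  if q == 0 then ce
  else if q <= KK * n then
    (if q.-1 %/ KK < size a then scode (Some (nth (inl e) (tr (nth (inl e) a (q.-1 %/ KK))) (q.-1 %% KK)))
     else ce)
  else if q == (KK * n).+1 then 2 else ce.
Proof.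
move=> ha hq; rewrite /ocs (nth_map None); last first.
  by rewrite size_cat size_map size_uu //; have -> : size (None :: map Some vv) = 2 by []; lia.
rewrite nth_cat size_map size_uu //.
case: q hq => [|q] hq.
  by rewrite /= /ce.
rewrite ltnS /=; case: (leqP q.+1 (KK * n)) => hqn.
  rewrite (nth_map (inl e)); last first.
    by rewrite size_cat size_flat_tr size_nseq -mulnDr subnKC //; lia.
  rewrite nth_cat size_flat_tr.
  case: ifP => hlt.
    rewrite ifT; last by rewrite ltn_divLR ?KK_gt0 // mulnC.
    rewrite {1}(divn_eq q KK) nth_flatten_const ?ltn_pmod ?KK_gt0 ?size_map //.
    - by rewrite (nth_map (inl e)) //; rewrite ltn_divLR ?KK_gt0 // mulnC.
    - by apply/allP=> z /mapP [l _ ->]; rewrite size_tr.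
    - by rewrite ltn_divLR ?KK_gt0 // mulnC.
  rewrite ifF; last by rewrite ltn_divLR ?KK_gt0 // mulnC hlt.
  by rewrite nth_nseq; case: ifP.
case: (ltngtP q (KK * n)) => hq2; first by lia.
  have -> : q = (KK * n).+1 by lia.
  have -> : (KK * n).+2 - (KK * n).+1 = 1 by lia.
  have -> : ((KK * n).+2 == (KK * n).+1) = false by lia.
  by [].
by rewrite hq2 subnn eqxx.
Qed.

Lemma goodenc_size x w a : goodenc x w a -> size x = w.+1 + w * size a.
Proof. by case=> _ _ _ ->; rewrite size_enc size_map. Qed.

Lemma goodenc_sa x w a : goodenc x w a -> size a <= size x.
Proof.
move=> g; rewrite (goodenc_size g); case: g => hw _ _ _.
by apply: leq_trans (leq_addl _ _); rewrite leq_pmull.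
Qed.

Lemma goodenc_Lw x w a : goodenc x w a -> Lw (size x) w = size a.
Proof. by move=> g; case: (g) => hw _ _ ex; rewrite /Lw (goodenc_size g) addKn mulKn. Qed.

Lemma WW_gt0 n : 0 < WW n.
Proof. by rewrite /WW addn2. Qed.

Lemma obit_ok x w a i : goodenc x w a -> i < len (size x) ->
  ceval x (obit (size x) w i) = nth false (enc (WW (size x)) (ocs a (size x))) i.
Proof.
move=> g hi; have hsa := goodenc_sa g; have hL := goodenc_Lw g.
set n := size x in hi hsa hL *; set W := WW n.
have W0 : 0 < W := WW_gt0 n.
rewrite /obit -/W; case: ltnP => hiW; first by rewrite nth_enc_pre.
case: eqP => [-> | hne]; first by rewrite nth_enc_w.
have hi' : W < i by rewrite ltn_neqAle hiW andbT; apply/eqP => h; apply: hne; rewrite h.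
set j := i - W.+1.
have ij : i = W.+1 + (j %/ W * W + j %% W) by rewrite -divn_eq /j; lia.
have hq : j %/ W < KK * n + 3.
  by rewrite ltn_divLR // /j; move: hi; rewrite /len -/W; lia.
rewrite [in RHS]ij nth_enc_blk ?size_ocs ?ltn_pmod // nth_ocs // hL.
case: eqP => // hq0; case: ifP => // hqn; last by case: eqP.
case: ifP => // ht.
have ht' : (j %/ W).-1 %/ KK < size (map (@gcode S) a) by rewrite size_map.
case: g => _ hc _ ex.
rewrite (@letbit_ok _ _ _ _ _ (nth (inl e) a ((j %/ W).-1 %/ KK))) ?ltn_pmod ?KK_gt0 //.
rewrite {1}ex bc_enc //; last by rewrite all_map.
by rewrite (nth_map (inl e)) // -(size_map (@gcode S)).
Qed.

Lemma has_unique (p q : pred nat) s w : w \in s -> (forall y, p y -> y = w) ->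
  has (fun y => p y && q y) s = p w && q w.
Proof.
move=> ws hp; apply/hasP/idP => [[y ys /andP [py qy]] | h].
  by rewrite -(hp y py) py qy.
by exists w.
Qed.

Lemma BB_ok x w a i : goodenc x w a -> i < len (size x) ->
  ceval x (BB (size x) i) = nth false (enc (WW (size x)) (ocs a (size x))) i.
Proof.
move=> g hi; rewrite /BB; case: eqP => [-> | hi0].
  by rewrite (valid_complete g) nth_enc_pre // WW_gt0.
rewrite ceval_COr has_map.
have ex : x = enc w (map (@gcode S) a) by case: g.
have hw : 0 < w by case: g.
rewrite (@eq_has _ _ (fun y => ceval x (prefix y) && ceval x (obit (size x) y i))); last first.
  by move=> y; rewrite /preim /= andbT.
rewrite (@has_unique (fun y => ceval x (prefix y)) (fun y => ceval x (obit (size x) y i)) _ w).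
- have hp : ceval x (prefix w) by rewrite ex prefix_enc // eqxx.
  by rewrite hp (obit_ok g hi).
- by rewrite mem_iota hw /= add1n ltnS (goodenc_size g); lia.
- by move=> y; rewrite ex prefix_enc // => /eqP.
Qed.

Lemma scode_inj : injective (@scode S).
Proof.
move=> [[s|y]|] [[s'|y']|] //= h; try lia.
- by congr (Some (inl _)); apply: enum_rank_inj; apply/val_inj => /=; lia.
- by congr (Some (inr _)); lia.
Qed.

Lemma split_eq (u u' v v' : seq (sletter S)) :
  map Some u ++ None :: map Some v = map Some u' ++ None :: map Some v' -> u = u' /\ v = v'.
Proof.
elim: u u' => [|b u IH] [|b' u'] //=.
- by case=> /(inj_map (@Some_inj _)).
- by case=> -> /IH [-> ->].
Qed.

Lemma rank_lt n (s : S) : 4 * enum_rank s < 2 ^ WW n.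
Proof.
rewrite /WW addn2 expnS expnS mulnA.
apply: leq_trans (_ : 4 * 2 ^ #|S| <= 4 * 2 ^ (n + #|S|)).
  rewrite ltn_pmul2l //; apply: leq_trans (ltn_ord _) (ltnW (ltn_expl _ _)) => //.
by rewrite leq_pmul2l // leq_pexp2l // leq_addl.
Qed.

Lemma ocs_lt x w a : goodenc x w a -> all (fun c => c < 2 ^ WW (size x)) (ocs a (size x)).
Proof.
move=> g; have hsz := goodenc_size g; case: g => hw hc ha ex.
have hwW : 2 ^ w <= 2 ^ WW (size x).
  by rewrite leq_pexp2l // /WW hsz; lia.
have hs : forall s : S, 4 * enum_rank s < 2 ^ WW (size x).
  by move=> s; apply: rank_lt.
rewrite /ocs all_map; apply/allP => o; rewrite mem_cat => /orP [].
  case/mapP=> b hb ->; rewrite /= .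
  move: hb; rewrite /uu in_cons mem_cat => /orP [/eqP -> //| /orP [] ].
  - case/flattenP=> bs /mapP [l hl ->] hb.
    have hl' : gcode l < 2 ^ w by apply: (allP hc).
    case: l hl hl' hb => [g'|[y []]] hl hl'; rewrite /tr.
    + rewrite in_cons => /orP [/eqP -> // | /nseqP [-> _] //].
    + rewrite mem_cat => /orP [].
        rewrite !in_cons orbF => /orP [/eqP -> //|/orP [/eqP -> | /eqP -> //]].
        by rewrite /=; apply: leq_trans hwW; move: hl' => /=; lia.
      by case/nseqP=> -> _.
    + rewrite -mem_undup undup_flatten_nseq ?MM_gt0 // mem_undup.
      rewrite !in_cons orbF => /orP [/eqP -> //|/orP [/eqP -> | /eqP -> //]].
      by rewrite /=; apply: leq_trans hwW; move: hl' => /=; lia.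
  - by case/nseqP=> -> _.
rewrite in_cons => /orP [/eqP -> /= | /mapP [b hb ->]].
  have h4 : 2 ^ 2 <= 2 ^ WW (size x) by rewrite leq_pexp2l // /WW; lia.
  by apply: leq_trans h4.
by move: hb; rewrite /vv inE => /eqP ->; exact: hs.
Qed.

Arguments bval : simpl never.
Arguments letbit : simpl never.
Arguments obit : simpl never.

Lemma sz_bval w t : csize (bval w t) <= 10 + #|S| * (w * 2 + 1).
Proof.
rewrite /bval /= !sz_cbit /= !addn0.
have h : sumn (map csize (map (fun g => EQc w t (4 * enum_rank g)) (Gcodes w))) <= #|S| * (w * 2 + 1).
  apply: leq_trans (sumn_le (k := w * 2 + 1) _) _.
    by rewrite all_map; apply/allP=> g _; exact: sz_EQc.
  rewrite size_map leq_mul2r; apply/orP; right.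
  rewrite size_filter; apply: leq_trans (count_size _ _) _; rewrite -cardE; exact: max_card.
move: h; set q := sumn _; set p := #|S| * _; lia.
Qed.

Lemma dp_bval w t : cdepth (bval w t) <= 4.
Proof.
have h : cdepth (COr (map (fun g => EQc w t (4 * enum_rank g)) (Gcodes w))) <= 3.
  by apply: (cdepth_COr (d := 2)); rewrite all_map; apply/allP=> g _; exact: dp_EQc.
rewrite /bval; apply: (cdepth_COr (d := 3)).
rewrite all_cons' all_cons' all_cons' h.
by rewrite /= !dp_cbit.
Qed.

Lemma sz_validc n : csize (validc n) <= n * ((n + 1) * (n + 10 + #|S| * (n * 2 + 1)) + 1) + 1.
Proof.
rewrite /validc; apply: leq_trans (csize_COr (k := (n + 1) * (n + 10 + #|S| * (n * 2 + 1)) + 1) _) _.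
  rewrite all_map; apply/allP=> w; rewrite mem_filter mem_iota => /andP [/andP [hwn _] /andP [hw1 _]].
  apply: leq_trans (csize_CAnd (k := n + 10 + #|S| * (n * 2 + 1)) _) _.
    rewrite all_cons'; apply/andP; split.
      by apply: leq_trans (_ : w + 3 <= _); [rewrite sz_prefix | lia].
    rewrite all_map; apply/allP=> t _; apply: leq_trans (sz_bval w t) _.
    have : #|S| * (w * 2 + 1) <= #|S| * (n * 2 + 1) by rewrite leq_mul2l; apply/orP; right; lia.
    lia.
  rewrite /= size_mkseq leq_add2r leq_mul2r; apply/orP; right.
  rewrite /Lw addn1 ltnS; apply: leq_trans (leq_div _ _) _; lia.
rewrite leq_add2r leq_mul2r; apply/orP; right.
rewrite size_map size_filter; apply: leq_trans (count_size _ _) _; by rewrite size_iota.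
Qed.

Lemma dp_validc n : cdepth (validc n) <= 6.
Proof.
rewrite /validc; apply: (cdepth_COr (d := 5)); rewrite all_map; apply/allP=> w _.
apply: (cdepth_CAnd (d := 4)); rewrite /= (leq_trans (dp_prefix w)) //=.
by rewrite all_map; apply/allP=> t _; exact: dp_bval.
Qed.

Lemma sz_letbit w t s r : csize (letbit w t s r) <= 19.
Proof.
rewrite /letbit /= !sz_cbit.
by case: (s == 0); case: (s == 1); case: (s %% 3 == 1); case: (r == 0); case: (r == 1);
  rewrite /= ?sz_cbit.
Qed.

Lemma dp_letbit w t s r : cdepth (letbit w t s r) <= 3.
Proof.
rewrite /letbit /= !dp_cbit.
by case: (s == 0); case: (s == 1); case: (s %% 3 == 1); case: (r == 0); case: (r == 1);
  rewrite /= ?dp_cbit.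
Qed.

Lemma sz_obit n w i : csize (obit n w i) <= 19.
Proof.
rewrite /obit; repeat case: ifP => _ //; exact: sz_letbit.
Qed.

Lemma dp_obit n w i : cdepth (obit n w i) <= 3.
Proof.
rewrite /obit; repeat case: ifP => _ //; exact: dp_letbit.
Qed.

Lemma sz_BB n i : csize (BB n i) <=
  n * ((n + 1) * (n + 10 + #|S| * (n * 2 + 1)) + 1) + 1 + (n * (n + 24) + 1).
Proof.
rewrite /BB; case: eqP => _.
  by apply: leq_trans (sz_validc n) _; apply: leq_addr.
apply: leq_trans (leq_addl _ _).
apply: leq_trans (csize_COr (k := n + 24) _) _.
  rewrite all_map; apply/allP=> w; rewrite mem_iota => /andP [_ hw].
  change (csize (CAnd [:: prefix w; obit n w i]) <= n + 24).
  have -> : csize (CAnd [:: prefix w; obit n w i]) = (csize (prefix w) + (csize (obit n w i) + 0)).+1 by [].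
  rewrite sz_prefix; have := sz_obit n w i; lia.
by rewrite size_map size_iota.
Qed.

Lemma dp_BB n i : cdepth (BB n i) <= 6.
Proof.
rewrite /BB; case: eqP => _; first exact: dp_validc.
apply: leq_trans (cdepth_COr (d := 4) _) _ => //.
rewrite all_map; apply/allP=> w _.
change (cdepth (CAnd [:: prefix w; obit n w i]) <= 4).
apply: (cdepth_CAnd (d := 3)); rewrite all_cons' (leq_trans (dp_prefix w)) // all_cons' andbT.
exact: dp_obit.
Qed.

Definition ff (x : seq bool) : seq bool :=
  mkseq (fun i => ceval x (BB (size x) i)) (len (size x)).

Lemma ff_enc x w a : goodenc x w a -> ff x = enc (WW (size x)) (ocs a (size x)).
Proof.
move=> g; apply: (@eq_from_nth _ false).
  by rewrite size_mkseq size_enc size_ocs // (goodenc_sa g).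
by move=> i; rewrite size_mkseq => hi; rewrite nth_mkseq // (BB_ok g hi).
Qed.

Lemma main_red : AC0_reducible (EQN_SAT_group op G) (EQN_SAT_semigroup op).
Proof.
exists ff; split.
  pose c := #|S| + KK + 30.
  exists 6, (19 * c.+1), len, (fun _ _ => CConst true), BB; split; [|split].
  - move=> n.
    pose P := n * ((n + 1) * (n + 10 + #|S| * (n * 2 + 1)) + 1) + 1 + (n * (n + 24) + 1).
    apply: leq_trans (_ : \sum_(i < len n) (1 + P) <= _).
      by apply: leq_sum => i _; rewrite leq_add2l; exact: sz_BB.
    rewrite sum_nat_const card_ord.
    have hX : n + #|S| + 30 <= n + c by rewrite /c; lia.
    have hX' : n + #|S| + KK + 30 <= n + c by rewrite /c; lia.
    apply: leq_trans (_ : (n + c) ^ 7 * (n + c) ^ 12 <= _).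
      by apply: leq_mul; [exact: lenbound hX' | exact: Pbound hX].
    rewrite -expnD (mulnC 19) expnM leq_exp2r //; exact: Xbound.
  - by move=> n i _; split => //; exact: dp_BB.
  - move=> x; rewrite /ff size_mkseq; split => // i hi; split => //.
    by move=> _; rewrite nth_mkseq.
move=> x; split.
- case=> w [a [hw hc hG ex hsat]].
  have g : goodenc x w a by split.
  exists (WW (size x)), (uu a (size x)), vv; split.
  + exact: WW_gt0.
  + exact: ocs_lt g.
  + exact: ff_enc g.
  + exact: dir1 hsat.
- case=> W' [u' [v' [hW' hc' ex' hsat]]].
  have hv : ceval x (validc (size x)).
    have : nth false (ff x) 0 = true by rewrite ex' nth_enc_pre.
    rewrite /ff nth_mkseq //; rewrite /len; lia.
  case: (valid_sound hv) => w [a g].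
  move: ex'; rewrite (ff_enc g) => /enc_inj [] //; first exact: WW_gt0.
    exact: ocs_lt g.
  move=> _ /(inj_map scode_inj) /split_eq [hu hv'].
  have g' := g; case: g' => hw hc hG ex.
  exists w, a; split => //.
  apply: dir2 (size x) _ _ => //.
  by rewrite hu hv'.
Qed.

End Alg.

Theorem lemma5p3 (S : finType) (op : S -> S -> S) (op_assoc : associative op)
    (G : {set S}) (HG : maximal_subgroup op G) :
  AC0_reducible (EQN_SAT_group op G) (EQN_SAT_semigroup op).
Proof.
have HG' := HG; case: HG' => [[_ [e [He _]]] _].
exact: (main_red op_assoc HG He).
Qed.
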